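(* Let $k\ge2$, $n\ge1$ be integers. Let $\bar{\mathcal{P}}$ and $\bar{\mathcal{P}}_p=\bar{\mathcal{P}}+\delta\bar{\mathcal{P}}$ in $\mathbb{R}^{[k,n]}$ be columnwise-substochastic tensors, and let $\mathbf{v}$ and $\mathbf{v}_p=\mathbf{v}+\delta\mathbf{v}$ in $\mathbb{R}^n$ be stochastic vectors. Let $\alpha\in[0,1)$ be such that $\varsigma:=(2k-3)\alpha(1-\alpha)^{-\frac{k-2}{k-1}}<1$, and let $\Delta:=\{\mathbf{y}\in\mathbb{R}^n_+:\mathbf{e}^T\mathbf{y}\le(1-\alpha)^{-\frac{1}{k-1}}\}$. Suppose $\mathbf{y}\in\Delta$ and $\mathbf{y}_p=\mathbf{y}+\delta\mathbf{y}\in\Delta$ satisfy $$(\mathbf{e}^T\mathbf{y})^{k-2}\mathbf{y}-\alpha\bar{\mathcal{P}}\mathbf{y}^{k-1}=\mathbf{v}\quad\text{and}\quad(\mathbf{e}^T\mathbf{y}_p)^{k-2}\mathbf{y}_p-\alpha\bar{\mathcal{P}}_p\mathbf{y}_p^{k-1}=\mathbf{v}_p.$$ Then $$\|\delta\mathbf{y}\|_1\le\frac{2k-3}{(k-1)(1-\varsigma)}\left(\frac{\alpha}{1-\alpha}\|\mathbf{R}(\delta\bar{\mathcal{P}})\|_1+\|\delta\mathbf{v}\|_1\right).$$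
   Context: For $\mathcal{P}\in\mathbb{R}^{[k,n]}$ (real tensors of order $k$, dimension $n$) and $\mathbf{y}\in\mathbb{R}^n$, $(\mathcal{P}\mathbf{y}^{k-1})_i=\sum_{i_2,\dots,i_k}p_{i i_2\dots i_k}y_{i_2}\cdots y_{i_k}$. $\bar{\mathcal{P}}$ is columnwise-substochastic if its entries are nonnegative and $\sum_{i}\bar p_{i i_2\dots i_k}\le1$ for all $i_2,\dots,i_k$. $\mathbf{e}$ is the all-ones vector; a stochastic vector is nonnegative with entries summing to $1$. $\mathbf{R}(\mathcal{P})\in\mathbb{R}^{n\times n^{k-1}}$ is the mode-1 unfolding of $\mathcal{P}$: $[\mathbf{R}(\mathcal{P})]_{i\ell}=p_{ij_2\dots j_k}$ with $\ell=j_2+(j_3-1)n+\cdots+(j_k-1)n^{k-2}$. For a matrix $M$, $\|M\|_1$ is the induced $1$-norm, i.e. the maximum absolute column sum. *)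

(* Defs.v *)
From HB Require Import structures.
From mathcomp Require Import all_boot all_order all_algebra.
From mathcomp Require Import all_classical all_reals.
From mathcomp Require Import exp.
Set Implicit Arguments. Unset Strict Implicit. Unset Printing Implicit Defensive.
Import Order.TTheory GRing.Theory Num.Theory.
Local Open Scope ring_scope.

(* A real tensor of order k and dimension n: entry p_{i i_2 ... i_k} is
   P i j, where j : 'I_(k-1) -> 'I_n lists (i_2, ..., i_k) (0-based:
   j m = i_{m+2}). *)
Definition tensor (R : Type) (k n : nat) :=
  'I_n -> {ffun 'I_(k.-1) -> 'I_n} -> R.

Definition tapply (R : numDomainType) (k n : nat) (P : tensor R k n)
  (y : 'I_n -> R) : 'I_n -> R :=
  fun i => \sum_(j : {ffun 'I_(k.-1) -> 'I_n}) P i j * \prod_(m < k.-1) y (j m).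

Definition tadd (R : numDomainType) (k n : nat) (P Q : tensor R k n) : tensor R k n :=
  fun i j => P i j + Q i j.

Definition col_substochastic (R : numDomainType) (k n : nat) (P : tensor R k n) :=
  (forall i j, 0 <= P i j) /\ (forall j, \sum_(i < n) P i j <= 1).

Definition stochastic (R : numDomainType) (n : nat) (v : 'I_n -> R) :=
  (forall i, 0 <= v i) /\ \sum_(i < n) v i = 1.

Definition norm1 (R : numDomainType) (n : nat) (v : 'I_n -> R) : R :=
  \sum_(i < n) `|v i|.

(* induced 1-norm of a matrix: maximal absolute column sum *)
Definition mx_norm1 (R : realDomainType) (m p : nat) (A : 'M[R]_(m, p)) : R :=
  \big[Num.max/0]_(l < p) \sum_(i < m) `|A i l|.

(* Decoding of the (0-based) column index l = sum_m j_m n^m of the mode-1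
   unfolding into the multi-index (j_0, ..., j_{k-2}) = (i_2-1, ..., i_k-1). *)
Lemma unfold_idx_proof (k n : nat) (l : 'I_(n ^ k.-1)) (m : 'I_(k.-1)) :
  ((l %/ n ^ m) %% n < n)%N.
Proof.
apply: ltn_pmod.
case: n l => [|n] l //.
case: k m l => [|[|k]] [m Hm] l //=.
by case: l; rewrite exp0n.
Qed.

Definition unfold_idx (k n : nat) (l : 'I_(n ^ k.-1)) : {ffun 'I_(k.-1) -> 'I_n} :=
  [ffun m => Ordinal (unfold_idx_proof l m)].

Definition unfold1 (R : Type) (k n : nat) (P : tensor R k n) : 'M[R]_(n, n ^ k.-1) :=
  \matrix_(i < n, l < n ^ k.-1) P i (unfold_idx l).

(* Main.v *)
Require Import Defs.
From HB Require Import structures.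
From mathcomp Require Import all_boot all_order all_algebra.
From mathcomp Require Import all_classical all_reals.
From mathcomp Require Import exp.
From mathcomp Require Import ring lra zify.
Import Order.TTheory GRing.Theory Num.Theory.

Lemma digits_inj n K l1 l2 : (l1 < n ^ K)%N -> (l2 < n ^ K)%N ->
  (forall m, (m < K)%N -> l1 %/ n ^ m %% n = l2 %/ n ^ m %% n) -> l1 = l2.
Proof.
case: n => [|n].
  by case: K => [|K]; [rewrite expn0; case: l1; case: l2 | rewrite exp0n].
elim: K l1 l2 => [|K IH] l1 l2.
  by rewrite expn0; case: l1; case: l2.
move=> h1 h2 hd.
rewrite (divn_eq l1 n.+1) (divn_eq l2 n.+1).
have := hd 0%N (ltn0Sn K); rewrite expn0 !divn1 => ->.
suff -> : l1 %/ n.+1 = l2 %/ n.+1 by []. apply: IH.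
- by rewrite ltn_divLR // -expnSr.
- by rewrite ltn_divLR // -expnSr.
move=> m hm; have := hd m.+1 hm.
by rewrite expnS !divnMA.
Qed.

Lemma unfold_idx_inj k n : injective (@unfold_idx k n).
Proof.
move=> l1 l2 E; apply: val_inj; apply: (@digits_inj n k.-1); [exact: ltn_ord | exact: ltn_ord | ].
move=> m hm.
have := congr1 (fun f : {ffun 'I_(k.-1) -> 'I_n} => nat_of_ord (f (Ordinal hm))) E.
by rewrite /unfold_idx !ffunE.
Qed.

Lemma unfold_onto k n (f : {ffun 'I_(k.-1) -> 'I_n}) : exists l, f = unfold_idx l.
Proof.
have := @inj_card_onto _ _ _ (@unfold_idx_inj k n).
rewrite card_ffun !card_ord => /(_ (leqnn _) f) /codomP [l ->].
by exists l.
Qed.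


Local Open Scope ring_scope.
Lemma col_le_norm (R : realDomainType) k n (dP : tensor R k n) f :
  \sum_i `|dP i f| <= mx_norm1 (unfold1 dP).
Proof.
have [l ->] := @unfold_onto k n f.
rewrite /mx_norm1.
have -> : \sum_i `|dP i (unfold_idx l)| = \sum_i `|unfold1 dP i l|.
  by apply: eq_bigr => i _; rewrite /unfold1 mxE.
exact: (le_bigmax 0 (fun l => \sum_i `|unfold1 dP i l|) l).
Qed.

Lemma tele_nat (R : comNzRingType) K (x y : nat -> R) :
  \prod_(i < K) x i - \prod_(i < K) y i =
  \sum_(m < K) \prod_(i < K)
     (if (i < m)%N then x i else if (i == m :> nat) then x i - y i else y i).
Proof.
elim: K => [|K IH]; first by rewrite !big_ord0 subrr.
rewrite big_ord_recr /= [\prod_(i < K.+1) y i]big_ord_recr /= big_ord_recr /=.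
have -> : \sum_(i < K) \prod_(i0 < K.+1)
    (if (i0 < i)%N then x i0 else if i0 == i :> nat then x i0 - y i0 else y i0)
  = (\prod_(i < K) x i - \prod_(i < K) y i) * y K.
  rewrite IH mulr_suml; apply: eq_bigr => m _.
  rewrite big_ord_recr /=.
  have hm := ltn_ord m.
  rewrite ltnNge (ltnW hm) /= (gtn_eqF hm); congr (_ * _).
rewrite big_ord_recr /= ltnn eqxx.
have -> : \prod_(i < K) (if (i < K)%N then x i else if i == K :> nat then x i - y i else y i)
   = \prod_(i < K) x i by apply: eq_bigr => i _; rewrite ltn_ord.
ring.
Qed.

Lemma tele_ord (R : comNzRingType) K (x y : 'I_K -> R) :
  \prod_i x i - \prod_i y i =
  \sum_(m : 'I_K) \prod_(i : 'I_K)
     (if (i < m)%N then x i else if i == m then x i - y i else y i).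
Proof.
case: K x y => [|K] x y; first by rewrite !big_ord0 subrr.
have := @tele_nat R K.+1 (fun i => x (inord i)) (fun i => y (inord i)).
have E : forall z : 'I_K.+1 -> R, \prod_(i < K.+1) z (inord i) = \prod_i z i.
  by move=> z; apply: eq_bigr => i _; rewrite inord_val.
rewrite !E => ->; apply: eq_bigr => m _; apply: eq_bigr => i _.
by rewrite inord_val.
Qed.

Lemma sum_prod_diff (R : realDomainType) n K (a b : 'I_n -> R) (c : R) :
  (forall i, 0 <= a i) -> (forall i, 0 <= b i) ->
  \sum_i a i <= c -> \sum_i b i <= c ->
  \sum_(f : {ffun 'I_K.+1 -> 'I_n}) `|\prod_m a (f m) - \prod_m b (f m)|
    <= K.+1%:R * c ^+ K * \sum_i `|a i - b i|.
Proof.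
move=> a0 b0 ha hb.
pose H (m i : 'I_K.+1) (j : 'I_n) :=
  if (i < m)%N then a j else if i == m then `|a j - b j| else b j.
have H0 : forall m i j, 0 <= H m i j.
  by move=> m i j; rewrite /H; case: ifP => _ //; case: ifP.
apply: (@le_trans _ _ (\sum_(f : {ffun 'I_K.+1 -> 'I_n}) \sum_m \prod_i H m i (f i))).
  apply: ler_sum => f _; rewrite tele_ord.
  apply: (le_trans (ler_norm_sum _ _ _)); apply: ler_sum => m _.
  rewrite normr_prod; apply: ler_prod => i _; rewrite normr_ge0 /=.
  rewrite /H; case: ifP => _; first by rewrite ger0_norm.
  by case: ifP => _ //; rewrite ger0_norm.
rewrite exchange_big /=.
have -> : K.+1%:R * c ^+ K * \sum_i `|a i - b i| =
   \sum_(m : 'I_K.+1) (c ^+ K * \sum_i `|a i - b i|).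
  by rewrite sumr_const card_ord -mulr_natl; ring.
apply: ler_sum => m _.
rewrite -(bigA_distr_bigA (fun i j => H m i j)) /=.
have c0 : 0 <= c by apply: le_trans ha; apply: sumr_ge0.
rewrite (bigD1 m) //= [c ^+ K * _]mulrC; apply: ler_pM.
- by apply: sumr_ge0.
- by apply: prodr_ge0 => i _; apply: sumr_ge0.
- by rewrite /H ltnn eqxx.
- apply: (@le_trans _ _ (\prod_(i | i != m) c)).
    apply: ler_prod => i him; rewrite sumr_ge0 //=.
    rewrite /H; case: (i < m)%N; first exact: ha.
    by rewrite (negbTE him).
  by rewrite prodr_const cardC1 card_ord.
Qed.

Lemma key_ineq (R : realFieldType) j (m M : R) : 1 <= m -> m <= M ->
  j.+1%:R * (m * (M ^+ j - m ^+ j)) <= j%:R * M ^+ j * (M ^+ j.+1 - m ^+ j.+1).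
Proof.
move=> m1 mM.
have m0 : 0 <= m by lra.
have M1 : 1 <= M by lra.
have A : m * (M ^+ j - m ^+ j) <= (M - m) * (j%:R * M ^+ j).
  rewrite subrXX mulrCA; apply: ler_wpM2l; first lra.
  rewrite mulr_sumr.
  have -> : j%:R * M ^+ j = \sum_(i < j) M ^+ j.
    by rewrite sumr_const card_ord mulr_natl.
  apply: ler_sum => i _.
  rewrite mulrCA -exprS.
  have hi := ltn_ord i.
  have -> : M ^+ j = M ^+ (j.-1 - i) * M ^+ i.+1.
    rewrite -exprD; congr (_ ^+ _); case: j i hi => [|j] i hi //=; lia.
  have h1 : m ^+ i.+1 <= M ^+ i.+1 by apply: lerXn2r; rewrite ?nnegrE; lra.
  have h2 : 0 <= M ^+ (j.-1 - i) by apply: exprn_ge0; lra.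
  have h3 : 0 <= m ^+ i.+1 by apply: exprn_ge0; lra.
  nra.
have B : (M - m) * j.+1%:R <= M ^+ j.+1 - m ^+ j.+1.
  rewrite subrXX; apply: ler_wpM2l; first lra.
  have -> : j.+1%:R = \sum_(i < j.+1) (1 : R) by rewrite sumr_const card_ord.
  apply: ler_sum => i _; apply: mulr_ege1; apply: exprn_ege1; lra.
apply: (le_trans (ler_wpM2l _ A)); first by apply: ler0n.
have -> : j.+1%:R * ((M - m) * (j%:R * M ^+ j)) = j%:R * M ^+ j * ((M - m) * j.+1%:R) by ring.
apply: ler_wpM2l => //; apply: mulr_ge0; first exact: ler0n.
apply: exprn_ge0; lra.
Qed.

Lemma lhs_bound (R : realFieldType) n j (a b : 'I_n -> R) :
  (forall i, 0 <= a i) -> (forall i, 0 <= b i) ->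
  1 <= \sum_i a i -> \sum_i a i <= \sum_i b i ->
  \sum_i `|b i - a i| <=
    (1 + j%:R / j.+1%:R) *
    \sum_i `|(\sum_l b l) ^+ j * b i - (\sum_l a l) ^+ j * a i|.
Proof.
move=> a0 b0 sa1 sab.
move: sa1 sab; set sa := \sum_l a l; set sb := \sum_l b l => sa1 sab.
pose u i := sb ^+ j * b i - sa ^+ j * a i.
have -> : \sum_i `|sb ^+ j * b i - sa ^+ j * a i| = \sum_i `|u i| by [].
have sb1 : 1 <= sb by lra.
have pj : 1 <= sb ^+ j by apply: exprn_ege1.
have pj0 : 0 < sb ^+ j by lra.
have pa : sa ^+ j <= sb ^+ j by apply: lerXn2r; rewrite ?nnegrE; lra.
pose D := (sb ^+ j - sa ^+ j) / sb ^+ j.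
have D0 : 0 <= D by apply: divr_ge0; lra.
have pt : forall i, `|b i - a i| <= `|u i| + a i * D.
  move=> i.
  have -> : b i - a i = u i / sb ^+ j - a i * D.
    rewrite /u /D; move: (sb ^+ j) (sa ^+ j) pj0 => X Y hX.
    by field; rewrite gt_eqF.
  apply: (le_trans (ler_normB _ _)).
  rewrite (ger0_norm (mulr_ge0 (a0 i) D0)); apply: lerD => //.
  rewrite normrM normfV (gtr0_norm pj0) ler_pdivrMr //.
  by apply: ler_peMr.
have S1 : \sum_i `|b i - a i| <= \sum_i `|u i| + sa * D.
  apply: (le_trans (ler_sum _ (fun i _ => pt i))).
  by rewrite big_split /= -mulr_suml.
have hS : sb ^+ j.+1 - sa ^+ j.+1 = \sum_i u i.
  by rewrite /u sumrB -!mulr_sumr !exprSr.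
have hSu : \sum_i u i <= \sum_i `|u i|.
  exact: le_trans (ler_norm _) (ler_norm_sum _ _ _).
have K := @key_ineq R j _ _ sa1 sab.
have saD : sa * D <= j%:R / j.+1%:R * (sb ^+ j.+1 - sa ^+ j.+1).
  rewrite /D mulrA ler_pdivrMr //.
  rewrite -(@ler_pM2l _ j.+1%:R) ?ltr0Sn //.
  have -> : j.+1%:R * (j%:R / j.+1%:R * (sb ^+ j.+1 - sa ^+ j.+1) * sb ^+ j)
     = j%:R * sb ^+ j * (sb ^+ j.+1 - sa ^+ j.+1).
    by field; rewrite addrC natr1 pnatr_eq0.
  exact: K.
have jj : 0 <= j%:R / j.+1%:R :> R by apply: divr_ge0; apply: ler0n.
have : j%:R / j.+1%:R * (sb ^+ j.+1 - sa ^+ j.+1) <= j%:R / j.+1%:R * \sum_i `|u i|.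
  by apply: ler_wpM2l => //; rewrite hS.
move: S1 saD; set U := \sum_i `|u i|; set q := j%:R / j.+1%:R; set T := sb ^+ j.+1 - sa ^+ j.+1.
move=> S1 saD h.
have : \sum_i `|b i - a i| <= U + q * U by lra.
by move=> h2; rewrite mulrDl mul1r.
Qed.

Lemma sum_ge1 (R : realFieldType) n j (z T v : 'I_n -> R) alpha :
  (forall i, 0 <= z i) -> 0 <= alpha -> (forall i, 0 <= T i) ->
  \sum_i v i = 1 ->
  (forall i, (\sum_l z l) ^+ j * z i - alpha * T i = v i) -> 1 <= \sum_l z l.
Proof.
move=> z0 a0 T0 v1 e.
have : \sum_i ((\sum_l z l) ^+ j * z i - alpha * T i) = \sum_i v i.
  by apply: eq_bigr => i _; exact: e.
rewrite sumrB -!mulr_sumr v1 -exprSr => h.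
have hT : 0 <= alpha * \sum_i T i by apply: mulr_ge0 => //; apply: sumr_ge0.
have h1 : 1 <= (\sum_l z l) ^+ j.+1 by lra.
rewrite leNgt; apply/negP => hs.
have s0 : 0 <= \sum_l z l by apply: sumr_ge0.
have := exprn_ilt1 j.+1 s0 hs; rewrite /= => h2; lra.
Qed.

Theorem theorem3p12 (R : realType) (k n : nat) (hk : (2 <= k)%N) (hn : (1 <= n)%N)
  (P dP : tensor R k n) (v dv y dy : 'I_n -> R) (alpha : R) :
  col_substochastic P ->
  col_substochastic (tadd P dP) ->
  stochastic v ->
  stochastic (fun i => v i + dv i) ->
  0 <= alpha -> alpha < 1 ->
  let varsigma := (2 * k - 3)%:R * alpha *
                  powR (1 - alpha) (- ((k - 2)%:R / (k - 1)%:R)) in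
  varsigma < 1 ->
  let inDelta (z : 'I_n -> R) :=
    (forall i, 0 <= z i) /\
    \sum_(i < n) z i <= powR (1 - alpha) (- (1 / (k - 1)%:R)) in
  let yp := fun i => y i + dy i in
  inDelta y -> inDelta yp ->
  (forall i, (\sum_(j < n) y j) ^+ (k - 2) * y i
             - alpha * tapply P y i = v i) ->
  (forall i, (\sum_(j < n) yp j) ^+ (k - 2) * yp i
             - alpha * tapply (tadd P dP) yp i = v i + dv i) ->
  norm1 dy <= (2 * k - 3)%:R / ((k - 1)%:R * (1 - varsigma)) *
              (alpha / (1 - alpha) * mx_norm1 (unfold1 dP) + norm1 dv).
Proof.
case: k hk P dP => [|[|k]] // _ P dP.
move=> [P0 P1] [Pp0 Pp1] [v0 v1] [vp0 vp1] a0 a1 vs hvs inD yp [y0 hy] [yp0 hyp] ey eyp.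
have e2 : (k.+2 - 2 = k)%N by lia.
have e1 : (k.+2 - 1 = k.+1)%N by lia.
have e3 : (2 * k.+2 - 3 = k.+1 + k)%N by lia.
have hvs' : (k.+1 + k)%:R * alpha * powR (1 - alpha) (- (k%:R / k.+1%:R)) < 1.
  by move: hvs; rewrite /vs e1 e2 e3.
move: hy hyp ey eyp; rewrite e1 e2 => hy hyp ey eyp.
rewrite /vs e1 e2 e3; clear vs hvs.
set c := powR (1 - alpha) (- (1 / k.+1%:R)) in hy hyp.
set s := \sum_(j < n) y j in hy ey.
set sp := \sum_(j < n) yp j in hyp eyp.
have c0 : 0 <= c by apply: powR_ge0.
have cK : c ^+ k.+1 = (1 - alpha)^-1.
  rewrite /c -powR_mulrn // -powRrM.
  have -> : - (1 / k.+1%:R) * k.+1%:R = -1 :> R by field; rewrite addrC natr1 pnatr_eq0.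
  by rewrite powR_inv1 //; lra.
have cj : powR (1 - alpha) (- (k%:R / k.+1%:R)) = c ^+ k.
  rewrite /c -powR_mulrn // -powRrM; congr (powR _ _).
  by rewrite mulNr mul1r mulrC.
move: hvs'; rewrite cj => hvs.
have tap0 : forall (Q : tensor R k.+2 n) (z : 'I_n -> R), (forall i j, 0 <= Q i j) ->
    (forall i, 0 <= z i) -> forall i, 0 <= tapply Q z i.
  move=> Q z hQ hz i; apply: sumr_ge0 => f _; apply: mulr_ge0 => //.
  by apply: prodr_ge0 => m _.
have s1 : 1 <= s by exact: (@sum_ge1 R n k y (tapply P y) v alpha y0 a0 (tap0 _ _ P0 y0) v1 ey).
have sp1 : 1 <= sp by exact: (@sum_ge1 R n k yp (tapply (tadd P dP) yp) (fun i => v i + dv i) alpha yp0 a0 (tap0 _ _ Pp0 yp0) vp1 eyp).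
pose T1 i := \sum_(f : {ffun 'I_k.+1 -> 'I_n}) dP i f * \prod_m yp (f m).
pose T2 i := \sum_(f : {ffun 'I_k.+1 -> 'I_n}) P i f * (\prod_m yp (f m) - \prod_m y (f m)).
have hw : forall i, sp ^+ k * yp i - s ^+ k * y i = dv i + alpha * (T1 i + T2 i).
  move=> i.
  have ht : tapply (tadd P dP) yp i = tapply P y i + T1 i + T2 i.
    rewrite /tapply /tadd /T1 /T2 -!big_split /=; apply: eq_bigr => f _; ring.
  have E1 := eyp i; have E2 := ey i; rewrite ht in E1.
  lra.
set N := mx_norm1 (unfold1 dP).
have sp0 : 0 <= sp by lra.
have hT1 : \sum_i `|T1 i| <= N * (1 - alpha)^-1.
  apply: (@le_trans _ _ (\sum_i \sum_(f : {ffun 'I_k.+1 -> 'I_n}) `|dP i f| * \prod_m yp (f m))).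
    apply: ler_sum => i _; apply: (le_trans (ler_norm_sum _ _ _)).
    apply: ler_sum => f _; rewrite normrM [X in _ * X]ger0_norm //.
    by apply: prodr_ge0 => m _; apply: yp0.
  rewrite exchange_big /=.
  apply: (@le_trans _ _ (\sum_(f : {ffun 'I_k.+1 -> 'I_n}) N * \prod_m yp (f m))).
    apply: ler_sum => f _; rewrite -mulr_suml; apply: ler_wpM2r.
      by apply: prodr_ge0 => m _; apply: yp0.
    exact: (@col_le_norm R k.+2 n dP f).
  rewrite -mulr_sumr -(bigA_distr_bigA (fun (m : 'I_k.+1) (j : 'I_n) => yp j)) /=.
  rewrite prodr_const card_ord -cK; apply: ler_wpM2l.
    apply: le_trans (@col_le_norm R k.+2 n dP [ffun _ => Ordinal hn]).
    by apply: sumr_ge0 => i _; exact: normr_ge0.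
  by apply: lerXn2r; rewrite ?nnegrE.
have hT2 : \sum_i `|T2 i| <= k.+1%:R * c ^+ k * \sum_i `|yp i - y i|.
  apply: (@le_trans _ _ (\sum_i \sum_(f : {ffun 'I_k.+1 -> 'I_n}) P i f * `|\prod_m yp (f m) - \prod_m y (f m)|)).
    apply: ler_sum => i _; apply: (le_trans (ler_norm_sum _ _ _)).
    apply: ler_sum => f _; rewrite normrM [X in X * _]ger0_norm //.
  rewrite exchange_big /=.
  apply: (@le_trans _ _ (\sum_(f : {ffun 'I_k.+1 -> 'I_n}) `|\prod_m yp (f m) - \prod_m y (f m)|)).
    apply: ler_sum => f _; rewrite -mulr_suml; apply: ler_piMl => //.
  exact: (@sum_prod_diff R n k yp y c yp0 y0 hyp hy).
pose w i := sp ^+ k * yp i - s ^+ k * y i.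
set D := \sum_i `|yp i - y i|.
have hW : \sum_i `|w i| <= norm1 dv + alpha * (N * (1 - alpha)^-1 + k.+1%:R * c ^+ k * D).
  apply: (@le_trans _ _ (\sum_i (`|dv i| + alpha * (`|T1 i| + `|T2 i|)))).
    apply: ler_sum => i _; rewrite /w hw.
    apply: (le_trans (ler_normD _ _)); apply: lerD => //.
    rewrite normrM ger0_norm //; apply: ler_wpM2l => //; exact: ler_normD.
  rewrite big_split /= -mulr_sumr big_split /=; apply: lerD => //.
  by apply: ler_wpM2l => //; apply: lerD.
have hD : D <= (1 + k%:R / k.+1%:R) * \sum_i `|w i|.
  case: (leP s sp) => h.
    exact: (@lhs_bound R n k y yp y0 yp0 s1 h).
  have h' : sp <= s by apply: ltW.
  have := (@lhs_bound R n k yp y yp0 y0 sp1 h').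
  have -> : \sum_i `|y i - yp i| = D by apply: eq_bigr => i _; rewrite distrC.
  have -> : \sum_i `|(\sum_l y l) ^+ k * y i - (\sum_l yp l) ^+ k * yp i| = \sum_i `|w i|.
    by apply: eq_bigr => i _; rewrite distrC.
  by [].
have hdy : norm1 dy = D by apply: eq_bigr => i _; rewrite /yp addrC addKr.
rewrite hdy.
set Q := (1 + k%:R / k.+1%:R : R) in hD.
have kn0 : (k.+1%:R : R) != 0 by rewrite pnatr_eq0.
have hQ : Q * k.+1%:R = (k.+1 + k)%:R.
  by rewrite /Q natrD; field; rewrite addrC natr1 pnatr_eq0.
have Q0 : 0 <= Q by rewrite /Q; apply: addr_ge0 => //; apply: divr_ge0; apply: ler0n.
set E := alpha / (1 - alpha) * N + norm1 dv.
set sg := (k.+1 + k)%:R * alpha * c ^+ k in hvs *.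
have step : D <= Q * E + sg * D.
  apply: (le_trans hD); apply: (le_trans (ler_wpM2l Q0 hW)).
  have -> : Q * (norm1 dv + alpha * (N * (1 - alpha)^-1 + k.+1%:R * c ^+ k * D))
    = Q * E + sg * D by rewrite /E /sg -hQ; ring.
  by [].
have sg1 : 0 < 1 - sg by lra.
have -> : (k.+1 + k)%:R / (k.+1%:R * (1 - sg)) * E = Q * E / (1 - sg).
  by rewrite -hQ; field; rewrite gt_eqF //= addrC natr1 pnatr_eq0.
rewrite ler_pdivlMr //.
nra.
Qed.
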